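(* Let $\gamma>0$ and let $k:\mathbb R_+\to\mathbb R_+$ be a $C^\infty$ function with $k(0)=\gamma$, $k'(x)>0$ for all $x\ge0$, and $k(x)\to+\infty$ as $x\to+\infty$. Define, for $x\ge0$, $$\Psi(x)=\int_0^x k(u)(e^{\gamma u}-1)\,du,$$ let $\Phi'$ be the inverse function of $\Psi':[0,\infty)\to[0,\infty)$ and $\Phi(x)=\int_0^x\Phi'(u)\,du$ (the convex dual of $\Psi$). Let $$\Phi_0(x)=\Big(\frac{x}{\gamma}+1\Big)\ln\Big(\frac{x}{\gamma}+1\Big)-\frac{x}{\gamma}$$ (the convex dual of $\Psi_0(x)=e^{\gamma x}-\gamma x-1$) and $\Lambda=\Phi_0-\Phi$. Then $$\lim_{x\to+\infty}\frac{\Lambda(x)}{x}=+\infty.$$ *)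

(* Defs.v *)
From Stdlib Require Import Reals.
Open Scope R_scope.

Definition deriv_nonneg (f : R -> R) (x l : R) : Prop :=
  limit1_in (fun y => (f y - f x) / (y - x)) (fun y => 0 <= y /\ y <> x) l x.

Definition smooth_nonneg (f : R -> R) : Prop :=
  exists D : nat -> R -> R,
    (forall x, 0 <= x -> D O x = f x) /\
    (forall n x, 0 <= x -> deriv_nonneg (D n) x (D (S n) x)).

(* Psi'(x) = k(x) (e^{gamma x} - 1), derivative of Psi(x) = int_0^x k(u)(e^{gamma u}-1) du *)
Definition dPsi (gamma : R) (k : R -> R) (x : R) : R := k x * (exp (gamma * x) - 1).

Definition Phi0 (gamma x : R) : R :=
  (x / gamma + 1) * ln (x / gamma + 1) - x / gamma.

(* Main.v *)
Require Import Defs.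
From Stdlib Require Import Reals Lra.
Open Scope R_scope.

Lemma lnle (a b : R) : 0 < a -> a <= b -> ln a <= ln b.
Proof.
  intros Ha [Hab|Hab]. left; apply ln_increasing; lra. subst; lra.
Qed.

Lemma divle (g a b : R) : 0 < g -> g * a <= b -> a <= b / g.
Proof.
  intros Hg H. replace a with ((g*a)*/g) by (field; lra).
  unfold Rdiv. apply Rmult_le_compat_r; [left; apply Rinv_0_lt_compat; lra | exact H].
Qed.

Theorem proposition3p3
  (gamma : R) (k : R -> R) (dPhi Phi : R -> R)
  (hgamma : 0 < gamma)
  (hk_pos : forall x, 0 <= x -> 0 <= k x)
  (hk_smooth : smooth_nonneg k)
  (hk0 : k 0 = gamma)
  (hk_deriv : forall x, 0 <= x -> exists l, deriv_nonneg k x l /\ 0 < l)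
  (hk_infty : forall M, exists N, forall x, N <= x -> M <= k x)
  (hdPhi : forall x, 0 <= x -> 0 <= dPhi x /\ dPsi gamma k (dPhi x) = x)
  (hPhi : forall x, 0 <= x ->
            exists pr : Riemann_integrable dPhi 0 x, RiemannInt pr = Phi x) :
  forall M, exists N, forall x, N <= x -> M <= (Phi0 gamma x - Phi x) / x.
Proof.
  intros M.
  set (E := exp (gamma * M + 1)).
  assert (HE : 0 < E) by apply exp_pos.
  set (K := 2 * gamma * E).
  assert (HK : 0 < K) by (unfold K; nra).
  destruct (hk_infty K) as [N HN].
  set (u0 := K * (exp (gamma * N) - 1)).
  exists (Rmax 1 (Rmax K u0)).
  intros x Hx.
  assert (Hx1 : 1 <= x) by (eapply Rle_trans; [apply Rmax_l | exact Hx]).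
  assert (HxK : K <= x) by (eapply Rle_trans; [eapply Rle_trans; [apply Rmax_l|apply Rmax_r] | exact Hx]).
  assert (Hxu : u0 <= x) by (eapply Rle_trans; [eapply Rle_trans; [apply Rmax_r|apply Rmax_r] | exact Hx]).
  set (L2 := ln (x / K + 1)).
  set (L1 := ln (x / gamma + 1)).
  assert (Hxk0 : 0 < x / K) by (apply Rdiv_lt_0_compat; lra).
  assert (Hxg0 : 0 < x / gamma) by (apply Rdiv_lt_0_compat; lra).
  assert (Hb : forall u, 0 <= u <= x -> dPhi u <= L2 / gamma).
  { intros u Hu. destruct (hdPhi u (proj1 Hu)) as [Hy Hyu].
    unfold dPsi in Hyu. set (y := dPhi u) in *.
    apply divle; [lra|].
    destruct (Rlt_or_le y N) as [HyN|HyN].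
    - assert (exp (gamma * N) <= x / K + 1).
      { unfold u0 in Hxu. assert (exp (gamma*N) - 1 <= x / K); [|lra].
        apply divle in Hxu; [|lra]. exact Hxu. }
      apply lnle in H; [|apply exp_pos]. rewrite ln_exp in H. unfold L2. nra.
    - assert (Hky : K <= k y) by (apply HN; lra).
      assert (He1 : 1 <= exp (gamma * y)).
      { pose proof (exp_ineq1_le (gamma*y)). nra. }
      assert (exp (gamma * y) <= x / K + 1).
      { assert (K * (exp (gamma * y) - 1) <= x) by nra.
        assert (exp (gamma*y) - 1 <= x / K); [|lra].
        apply divle; lra. }
      apply lnle in H; [|apply exp_pos]. rewrite ln_exp in H. exact H. }
  assert (HPhi : Phi x <= x * (L2 / gamma)).
  { destruct (hPhi x ltac:(lra)) as [pr Hpr]. rewrite <- Hpr.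
    apply Rle_trans with (RiemannInt (RiemannInt_P14 0 x (L2/gamma))).
    - apply RiemannInt_P19; [lra|]. intros u Hu. unfold fct_cte. apply Hb; lra.
    - rewrite RiemannInt_P15. lra. }
  assert (HL1 : 0 <= L1).
  { unfold L1. rewrite <- ln_1. apply lnle; lra. }
  assert (HL12 : gamma * M + 1 + L2 <= L1).
  { assert (Heq : gamma * M + 1 + L2 = ln (E * (x / K + 1))).
    { rewrite ln_mult; [|lra|lra]. unfold E. rewrite ln_exp. reflexivity. }
    rewrite Heq. unfold L1. apply lnle; [nra|].
    assert (E * (x / K) = x / (2*gamma)) by (unfold K; field; lra).
    assert (x / gamma = 2 * (x / (2*gamma))) by (field; lra).
    assert (x / (2*gamma) >= E).
    { apply Rle_ge. apply divle; [lra|]. unfold K in HxK. lra. }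
    nra. }
  set (t := x / gamma) in *.
  assert (Ht : x * (L2 / gamma) = t * L2) by (unfold t; field; lra).
  assert (Htx : x = t * gamma) by (unfold t; field; lra).
  assert (Hnum : M * x <= Phi0 gamma x - Phi x).
  { unfold Phi0. fold t. fold L1. rewrite Ht in HPhi. replace (M*x) with (t*(gamma*M)) by (rewrite Htx; ring).
    assert (0 <= t * (L1 - L2 - 1 - gamma * M)) by (apply Rmult_le_pos; lra). nra. }
  assert (Hn2 : x * M <= Phi0 gamma x - Phi x) by lra.
  apply divle in Hn2; [exact Hn2 | lra].
Qed.
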